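(* Suppose that the modal operator $\bullet$ occurs neither in any type of the typing context $\Gamma$ nor in the type expression $A$ (note that $\top=\mu X.\bullet X$ contains $\bullet$). If $\Gamma\vdash M:A$ is derivable in $\lambda$A, then $M$ is $\beta$-normalizable.
   Context: Type expressions: fix a countably infinite set of type variables $X,Y,Z,\dots$. Pseudo type expressions are generated by $A::=X\mid A\to A\mid \bullet A\mid \mu X.A$ ($\mu$ binds $X$; $\alpha$-convertible expressions are identified; $\to$ associates to the right; $\bullet$ binds tighter than $\to$, which binds tighter than $\mu$). $A[B/X]$ denotes capture-avoiding substitution. $\top$ abbreviates $\mu X.\bullet X$, and $\bullet^n A$ denotes $A$ prefixed by $n$ copies of $\bullet$. The tail $t(A)$ is defined by $t(X)=X$, $t(A\to B)=t(B)$, $t(\bullet A)=\bullet t(A)$, $t(\mu X.A)=\mu X.t(A)$; it always has the form $\bullet^{m_0}\mu X_1.\bullet^{m_1}\mu X_2.\cdots\mu X_n.\bullet^{m_n}Y$. $A$ is a $\top$-variant iff $Y=X_i$ for some $1\le i\le n$ with $X_i\notin\{X_{i+1},\dots,X_n\}$ and $m_i+\dots+m_n\ge 1$. $A$ is proper in $X$ iff: a variable $Y$ is proper in $X$ iff $Y\neq X$; $\bullet A$ is always proper in $X$; $A\to B$ is proper in $X$ iff both $A,B$ are proper in $X$ or $B$ is a $\top$-variant; for $Y\ne X$, $\mu Y.A$ is proper in $X$ iff $A$ is proper in $X$ or $\mu Y.A$ is a $\top$-variant. Type expressions are the least set of pseudo type expressions containing all type variables, closed under $\to$ and $\bullet$,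 and containing $\mu X.A$ whenever it contains $A$ and $A$ is proper in $X$. Equality: $\cong$ is the least relation on type expressions such that: $A\cong A$; $A\cong B$ implies $B\cong A$; $A\cong B$ and $B\cong C$ imply $A\cong C$; $A\cong B$ implies $\bullet A\cong\bullet B$; $A\cong C$ and $B\cong D$ imply $A\to B\cong C\to D$; $A\to\top\cong\top$; $\mu X.A\cong A[\mu X.A/X]$; and if $A\cong C[A/X]$ with $C$ proper in $X$, then $A\cong\mu X.C$. $\simeq$ is the least relation satisfying the same closure conditions and additionally $\bullet(A\to B)\simeq\bullet A\to\bullet B$. Subtyping: a subtyping assumption $\gamma$ is a finite set of pairs $X\preceq Y$ of type variables in which each type variable occurs at most once; $FTV(\gamma)$ is the set of variables occurring in it. Judgments $\gamma\vdash A\preceq B$ are derived by the rules: $\gamma\cup\{X\preceq Y\}\vdash X\preceq Y$; $\gamma\vdash A\preceq\top$; from $A\simeq B$ infer $\gamma\vdash A\preceq B$; from $\gamma_1\vdash A\preceq B$ and $\gamma_2\vdash B\preceq C$ infer $\gamma_1\cup\gamma_2\vdash A\preceq C$; from $\gamma\vdash A\preceq B$ infer $\gamma\vdash\bullet A\preceq\bullet B$; from $\gamma_1\vdash A'\preceq A$ and $\gamma_2\vdash B\preceq B'$ infer $\gamma_1\cup\gamma_2\vdash A\to B\preceq A'\to B'$; from $\gamma\cup\{X\preceq Y\}\vdash A\preceq B$ infer $\gamma\vdash\mu X.A\preceq\mu Y.B$, provided $X\notin FTV(\gamma)\cup FTV(B)$, $Y\notin FTV(\gamma)\cup FTV(A)$,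 $A$ is proper in $X$ and $B$ is proper in $Y$; and $\gamma\vdash A\preceq\bullet A$. All sets $\gamma\cup\{X\preceq Y\}$, $\gamma_1\cup\gamma_2$ must be well-formed subtyping assumptions. $A\preceq B$ means $\{\}\vdash A\preceq B$ is derivable. Typing system $\lambda$A: untyped $\lambda$-terms $M::=x\mid\lambda x.M\mid MM$ (identified up to $\alpha$-conversion). A typing context $\Gamma$ is a finite map from individual variables to type expressions, written $\{x_1:A_1,\dots,x_n:A_n\}$; $\bullet\Gamma$ is $\{x_1:\bullet A_1,\dots,x_n:\bullet A_n\}$; unions of contexts must be well-formed (a variable receives at most one type). Rules: (var) $\Gamma\cup\{x:A\}\vdash x:A$; (shift) from $\bullet\Gamma\vdash M:\bullet A$ infer $\Gamma\vdash M:A$; ($\top$) $\Gamma\vdash M:\top$; ($\preceq$) from $\Gamma\vdash M:A$ and $A\preceq B$ infer $\Gamma\vdash M:B$; ($\to$I) from $\Gamma\cup\{x:A\}\vdash M:B$ infer $\Gamma\vdash\lambda x.M:A\to B$; ($\to$E) from $\Gamma_1\vdash M:A\to B$ and $\Gamma_2\vdash N:A$ infer $\Gamma_1\cup\Gamma_2\vdash MN:B$. *)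

(* Defs.v *)
(* Locally nameless representation:
   free (type / individual) variables are named by nat atoms, bound
   variables are de Bruijn indices.  Alpha-equivalent expressions are
   thereby identified.  Binders are introduced in the rules through
   [close], mirroring the named presentation of the paper. *)
From Stdlib Require Import List Arith Bool Relations.
Import ListNotations.

Inductive ty : Type :=
| TFVar : nat -> ty
| TBVar : nat -> ty
| TArr  : ty -> ty -> ty
| TBul  : ty -> ty
| TMu   : ty -> ty.          (* mu X. A  (body uses TBVar 0) *)

Fixpoint ty_open_rec (k : nat) (U : ty) (T : ty) : ty :=
  match T with
  | TFVar X => TFVar X
  | TBVar i => if Nat.eqb i k then U else TBVar i
  | TArr A B => TArr (ty_open_rec k U A) (ty_open_rec k U B)
  | TBul A => TBul (ty_open_rec k U A)
  | TMu A => TMu (ty_open_rec (S k) U A)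
  end.
(* body instantiation: for a body A of mu, [ty_open A U] is A[U/X] *)
Definition ty_open (A U : ty) : ty := ty_open_rec 0 U A.

Fixpoint ty_close_rec (k : nat) (X : nat) (T : ty) : ty :=
  match T with
  | TFVar Y => if Nat.eqb Y X then TBVar k else TFVar Y
  | TBVar i => TBVar i
  | TArr A B => TArr (ty_close_rec k X A) (ty_close_rec k X B)
  | TBul A => TBul (ty_close_rec k X A)
  | TMu A => TMu (ty_close_rec (S k) X A)
  end.
(* [TMu (ty_close X A)] is the named  mu X. A *)
Definition ty_close (X : nat) (A : ty) : ty := ty_close_rec 0 X A.

Fixpoint ty_subst (X : nat) (U : ty) (T : ty) : ty :=
  match T with
  | TFVar Y => if Nat.eqb Y X then U else TFVar Y
  | TBVar i => TBVar i
  | TArr A B => TArr (ty_subst X U A) (ty_subst X U B)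
  | TBul A => TBul (ty_subst X U A)
  | TMu A => TMu (ty_subst X U A)
  end.

Fixpoint ftv (T : ty) : list nat :=
  match T with
  | TFVar X => [X]
  | TBVar _ => []
  | TArr A B => ftv A ++ ftv B
  | TBul A => ftv A
  | TMu A => ftv A
  end.

Definition top : ty := TMu (TBul (TBVar 0)).

Fixpoint bullets (n : nat) (A : ty) : ty :=
  match n with 0 => A | S m => TBul (bullets m A) end.

Fixpoint tail (T : ty) : ty :=
  match T with
  | TFVar X => TFVar X
  | TBVar i => TBVar i
  | TArr _ B => tail B
  | TBul A => TBul (tail A)
  | TMu A => TMu (tail A)
  end.

(* On a tail  bullet^{m0} mu X1. bullet^{m1} ... mu Xn. bullet^{mn} Y :
   [L] records, for each enclosing mu-binder of the tail (innermost first),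
   whether at least one bullet occurs after it.  Y is a bound variable
   (de Bruijn index k) exactly when Y = X_i with X_i not rebound later,
   and then L[k] says m_i + ... + m_n >= 1. *)
Fixpoint tv (L : list bool) (T : ty) : bool :=
  match T with
  | TFVar _ => false
  | TBVar k => match nth_error L k with Some b => b | None => false end
  | TArr _ _ => false
  | TBul A => tv (map (fun _ => true) L) A
  | TMu A => tv (false :: L) A
  end.

Definition top_variant (A : ty) : bool := tv [] (tail A).

(* A is proper in X (bound variables are always distinct from X) *)
Fixpoint proper (X : nat) (T : ty) : bool :=
  match T with
  | TFVar Y => negb (Nat.eqb Y X)
  | TBVar _ => true
  | TBul _ => true
  | TArr A B => (proper X A && proper X B) || top_variant B
  | TMu A => proper X A || top_variant (TMu A)
  end.

Inductive is_type : ty -> Prop :=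
| it_var X : is_type (TFVar X)
| it_arr A B : is_type A -> is_type B -> is_type (TArr A B)
| it_bul A : is_type A -> is_type (TBul A)
| it_mu X A : is_type A -> proper X A = true -> is_type (TMu (ty_close X A)).

Inductive teq : ty -> ty -> Prop :=
| teq_refl A : is_type A -> teq A A
| teq_sym A B : teq A B -> teq B A
| teq_trans A B C : teq A B -> teq B C -> teq A C
| teq_bul A B : teq A B -> teq (TBul A) (TBul B)
| teq_arr A B C D : teq A C -> teq B D -> teq (TArr A B) (TArr C D)
| teq_top A : is_type A -> teq (TArr A top) top
| teq_unfold A : is_type (TMu A) -> teq (TMu A) (ty_open A (TMu A))
| teq_fix X A C : is_type A -> is_type C -> proper X C = true ->
    teq A (ty_subst X A C) -> teq A (TMu (ty_close X C))
| teq_distr A B : is_type A -> is_type B ->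
    teq (TBul (TArr A B)) (TArr (TBul A) (TBul B)).

(* a subtyping assumption: a finite set of pairs X ≼ Y (as a list,
   only membership matters) *)
Definition sassum := list (nat * nat).

Definition sa_ftv (g : sassum) : list nat :=
  flat_map (fun p => [fst p; snd p]) g.

Definition sa_wf (g : sassum) : Prop :=
  (forall p, In p g -> fst p <> snd p) /\
  (forall p q Z, In p g -> In q g ->
     (Z = fst p \/ Z = snd p) -> (Z = fst q \/ Z = snd q) -> p = q).

Definition sa_union (g g1 g2 : sassum) : Prop :=
  forall p, In p g <-> In p g1 \/ In p g2.

Inductive sub : sassum -> ty -> ty -> Prop :=
| sub_ax g X Y : sa_wf g -> In (X, Y) g -> sub g (TFVar X) (TFVar Y)
| sub_top g A : sa_wf g -> is_type A -> sub g A top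
| sub_eq g A B : sa_wf g -> teq A B -> sub g A B
| sub_trans g1 g2 g A B C : sub g1 A B -> sub g2 B C ->
    sa_union g g1 g2 -> sa_wf g -> sub g A C
| sub_bul g A B : sub g A B -> sub g (TBul A) (TBul B)
| sub_arr g1 g2 g A A' B B' : sub g1 A' A -> sub g2 B B' ->
    sa_union g g1 g2 -> sa_wf g -> sub g (TArr A B) (TArr A' B')
| sub_mu g g' X Y A B : sub g' A B -> sa_union g' g [(X, Y)] -> sa_wf g' ->
    sa_wf g ->
    ~ In X (sa_ftv g ++ ftv B) -> ~ In Y (sa_ftv g ++ ftv A) ->
    proper X A = true -> proper Y B = true ->
    sub g (TMu (ty_close X A)) (TMu (ty_close Y B))
| sub_next g A : sa_wf g -> is_type A -> sub g A (TBul A).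

Definition subtype (A B : ty) : Prop := sub [] A B.

Inductive tm : Type :=
| Var  : nat -> tm
| BVar : nat -> tm
| Lam  : tm -> tm
| App  : tm -> tm -> tm.

Fixpoint tm_close_rec (k x : nat) (M : tm) : tm :=
  match M with
  | Var y => if Nat.eqb y x then BVar k else Var y
  | BVar i => BVar i
  | Lam N => Lam (tm_close_rec (S k) x N)
  | App N P => App (tm_close_rec k x N) (tm_close_rec k x P)
  end.
(* [Lam (tm_close x M)] is the named  lambda x. M *)
Definition tm_close (x : nat) (M : tm) : tm := tm_close_rec 0 x M.

Fixpoint tm_lc_at (k : nat) (M : tm) : bool :=
  match M with
  | Var _ => true
  | BVar i => Nat.ltb i k
  | Lam N => tm_lc_at (S k) N
  | App N P => tm_lc_at k N && tm_lc_at k P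
  end.
Definition is_term (M : tm) : Prop := tm_lc_at 0 M = true.

Definition ctx := list (nat * ty).

Definition ctx_ok (G : ctx) : Prop :=
  (forall x A B, In (x, A) G -> In (x, B) G -> A = B) /\
  (forall x A, In (x, A) G -> is_type A).

Definition ctx_union (G G1 G2 : ctx) : Prop :=
  forall p, In p G <-> In p G1 \/ In p G2.

Definition bul_ctx (G : ctx) : ctx := map (fun p => (fst p, TBul (snd p))) G.

Inductive typing : ctx -> tm -> ty -> Prop :=
| ty_var G x A : ctx_ok G -> In (x, A) G -> typing G (Var x) A
| ty_shift G M A : typing (bul_ctx G) M (TBul A) -> typing G M A
| ty_top G M : ctx_ok G -> is_term M -> typing G M top
| ty_sub G M A B : typing G M A -> subtype A B -> typing G M B
| ty_abs G G' x M A B : typing G' M B -> ctx_union G' G [(x, A)] ->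
    ctx_ok G' -> ctx_ok G -> typing G (Lam (tm_close x M)) (TArr A B)
| ty_app G1 G2 G M N A B : typing G1 M (TArr A B) -> typing G2 N A ->
    ctx_union G G1 G2 -> ctx_ok G -> typing G (App M N) B.

Fixpoint tm_lift (c : nat) (M : tm) : tm :=
  match M with
  | Var y => Var y
  | BVar i => if Nat.leb c i then BVar (S i) else BVar i
  | Lam N => Lam (tm_lift (S c) N)
  | App N P => App (tm_lift c N) (tm_lift c P)
  end.

Fixpoint tm_bsubst (k : nat) (N : tm) (M : tm) : tm :=
  match M with
  | Var y => Var y
  | BVar i => if Nat.eqb i k then N
              else if Nat.ltb k i then BVar (pred i) else BVar i
  | Lam P => Lam (tm_bsubst (S k) (tm_lift 0 N) P)
  | App P Q => App (tm_bsubst k N P) (tm_bsubst k N Q)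
  end.

Inductive beta : tm -> tm -> Prop :=
| beta_redex M N : beta (App (Lam M) N) (tm_bsubst 0 N M)
| beta_appl M M' N : beta M M' -> beta (App M N) (App M' N)
| beta_appr M N N' : beta N N' -> beta (App M N) (App M N')
| beta_lam M M' : beta M M' -> beta (Lam M) (Lam M').

Definition beta_normal (M : tm) : Prop := forall N, ~ beta M N.

Definition beta_normalizable (M : tm) : Prop :=
  exists N, clos_refl_trans tm beta M N /\ beta_normal N.

Fixpoint bullet_free (T : ty) : bool :=
  match T with
  | TFVar _ | TBVar _ => true
  | TArr A B => bullet_free A && bullet_free B
  | TBul _ => false
  | TMu A => bullet_free A
  end.

(* Main.v *)
Require Import Defs.
From Stdlib Require Import List Arith Bool Relations Lia.
From Stdlib Require Import FunctionalExtensionality PropExtensionality.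
Import ListNotations.

Definition sem := nat -> tm -> Prop.
Definition full : sem := fun _ _ => True.

Fixpoint iterS (j : nat) (F : sem -> sem) (U : sem) : sem :=
  match j with 0 => U | S j' => F (iterS j' F U) end.

Definition mufix (F : sem -> sem) : sem := fun n => iterS (S n) F full n.

Definition upd (eta : nat -> sem) (X : nat) (U : sem) : nat -> sem :=
  fun Y => if Nat.eqb Y X then U else eta Y.

Fixpoint interp (eta : nat -> sem) (rho : list sem) (T : ty) : sem :=
  match T with
  | TFVar X => fun n M => is_term M /\ eta X n M
  | TBVar i => fun n M => is_term M /\ nth i rho full n M
  | TArr A B => fun n M => is_term M /\
      forall k N, k <= n -> interp eta rho A k N -> interp eta rho B k (App M N)
  | TBul A => fun n M => match n with 0 => is_term M | S m => interp eta rho A m M end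
  | TMu A => mufix (fun U => interp eta (U :: rho) A)
  end.

Lemma sem_ext (A B : sem) : (forall n M, A n M <-> B n M) -> A = B.
Proof.
  intros H. apply functional_extensionality; intro n.
  apply functional_extensionality; intro M. apply propositional_extensionality. apply H.
Qed.

Definition dist (n : nat) (A B : sem) := forall k M, k < n -> (A k M <-> B k M).
Definition contractive (F : sem -> sem) := forall n U V, dist n U V -> dist (S n) (F U) (F V).

Lemma dist_mono n m A B : m <= n -> dist n A B -> dist m A B.
Proof. intros Hm H k M Hk. apply H. lia. Qed.
Lemma dist_sym n A B : dist n A B -> dist n B A.
Proof. intros H k M Hk. symmetry. apply H; auto. Qed.
Lemma dist_trans n A B C : dist n A B -> dist n B C -> dist n A C.
Proof. intros H1 H2 k M Hk. rewrite (H1 k M Hk). apply H2; auto. Qed.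
Lemma dist_refl n A : dist n A A.
Proof. intros k M Hk. tauto. Qed.
Lemma dist_0 A B : dist 0 A B.
Proof. intros k M Hk. lia. Qed.

Lemma iter_dist F : contractive F -> forall j U V, dist j (iterS j F U) (iterS j F V).
Proof.
  intros HF. induction j; simpl; intros U V.
  - apply dist_0.
  - apply HF. apply IHj.
Qed.

Lemma iterS_add F j p U : iterS (j + p) F U = iterS j F (iterS p F U).
Proof. induction j; simpl; congruence. Qed.

Lemma mufix_iter F : contractive F -> forall n m, n < m -> forall M,
  (mufix F n M <-> iterS m F full n M).
Proof.
  intros HF n m Hnm M. unfold mufix.
  replace m with (S n + (m - S n)) by lia. rewrite iterS_add.
  apply iter_dist; auto.
Qed.

Lemma mufix_unfold F n M : mufix F n M = F (iterS n F full) n M.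
Proof. reflexivity. Qed.

Lemma mufix_eq F : contractive F -> F (mufix F) = mufix F.
Proof.
  intros HF. apply sem_ext. intros n M. rewrite mufix_unfold.
  apply (HF n (mufix F) (iterS n F full)); [|lia].
  intros k M' Hk. apply mufix_iter; auto.
Qed.

Lemma mufix_unique F U : contractive F -> F U = U -> U = mufix F.
Proof.
  intros HF HU.
  assert (H : forall n, dist n U (mufix F)).
  { induction n. apply dist_0. rewrite <- HU, <- (mufix_eq F HF). apply HF; auto. }
  apply sem_ext. intros n M. apply (H (S n)). lia.
Qed.

Lemma fix_dist F G N : contractive F -> contractive G ->
  (forall U, dist N (F U) (G U)) -> dist N (mufix F) (mufix G).
Proof.
  intros HF HG H.
  assert (forall m, m <= N -> dist m (mufix F) (mufix G)).
  { induction m; intros Hm. apply dist_0.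
    rewrite <- (mufix_eq F HF), <- (mufix_eq G HG).
    apply dist_trans with (F (mufix G)).
    - apply HF. apply IHm. lia.
    - apply dist_mono with N; auto. }
  apply H0; auto.
Qed.
Fixpoint ty_lc (k : nat) (T : ty) : bool :=
  match T with
  | TFVar _ => true
  | TBVar i => Nat.ltb i k
  | TArr A B => ty_lc k A && ty_lc k B
  | TBul A => ty_lc k A
  | TMu A => ty_lc (S k) A
  end.

Fixpoint pbv (k : nat) (T : ty) : bool :=
  match T with
  | TFVar _ => true
  | TBVar i => negb (Nat.eqb i k)
  | TArr A B => (pbv k A && pbv k B) || top_variant B
  | TBul _ => true
  | TMu A => pbv (S k) A || top_variant (TMu A)
  end.

Fixpoint good (T : ty) : bool :=
  match T with
  | TFVar _ | TBVar _ => true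
  | TArr A B => good A && good B
  | TBul A => good A
  | TMu A => good A && pbv 0 A
  end.

Lemma interp_lc T : forall eta rho n M, interp eta rho T n M -> is_term M.
Proof.
  induction T as [X|i|T1 IHT1 T2 IHT2|T IHT|T IHT]; simpl; intros eta rho n M H.
  - tauto.
  - tauto.
  - tauto.
  - destruct n; auto. eapply IHT; eauto.
  - unfold mufix in H. simpl in H. eapply IHT; eauto.
Qed.

Lemma app_term M N : is_term M -> is_term N -> is_term (App M N).
Proof. unfold is_term; simpl; intros -> ->; reflexivity. Qed.

Lemma tv_full T : forall L rho0 rho eta n,
  tv L (Defs.tail T) = true -> length L = length rho0 ->
  (forall i k M, i < length rho0 -> k <= n -> is_term M -> nth i rho0 full k M) ->
  forall M, is_term M -> interp eta (rho0 ++ rho) T n M.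
Proof.
  induction T as [X|i|T1 IHT1 T2 IHT2|T IHT|T IHT]; simpl; intros L rho0 rho eta n Htv Hlen Hinv M HM.
  - discriminate.
  - split; auto.
    destruct (nth_error L i) eqn:E; [|discriminate].
    assert (i < length rho0).
    { rewrite <- Hlen. apply nth_error_Some. rewrite E; discriminate. }
    rewrite app_nth1 by auto. apply Hinv; auto.
  - split; auto. intros k N Hk HN.
    apply (IHT2 L rho0 rho eta k); auto;
      [intros; apply Hinv; auto; lia | apply app_term; auto; eapply interp_lc; eauto].
  - destruct n; auto.
    apply (IHT (map (fun _ => true) L) rho0 rho eta n); auto;
      try (rewrite length_map; auto); try (intros; apply Hinv; auto; lia).
  - unfold mufix.
    assert (Hj : forall j k M, k <= n -> is_term M -> iterS j (fun U => interp eta (U :: rho0 ++ rho) T) full k M).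
    { induction j; simpl; intros k M' Hk HM'. exact I.
      change (interp eta ((iterS j (fun U => interp eta (U :: rho0 ++ rho) T) full :: rho0) ++ rho) T k M').
      apply (IHT (false :: L)); auto; [simpl; auto|].
      intros [|i] k' M'' Hi Hk' HM''; simpl.
        + apply IHj; auto; lia.
        + apply Hinv; simpl in Hi; auto; lia. }
    apply Hj; auto.
Qed.

Lemma top_variant_full T eta rho n M : top_variant T = true -> is_term M -> interp eta rho T n M.
Proof.
  intros H HM. apply (tv_full T [] [] rho eta n); simpl; auto.
  intros; lia.
Qed.
Definition arr (A B : sem) : sem := fun n M => is_term M /\
  forall k N, k <= n -> A k N -> B k (App M N).
Definition bul (A : sem) : sem := fun n M => match n with 0 => is_term M | S m => A m M end.

Lemma arr_dist n A A' B B' : dist n A A' -> dist n B B' -> dist n (arr A B) (arr A' B').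
Proof.
  intros HA HB m M Hm. unfold arr. split; intros [H1 H2]; split; auto; intros k N Hk HN.
  - apply HB; [lia|]. apply H2; auto. apply HA; auto; lia.
  - apply HB; [lia|]. apply H2; auto. apply HA; auto; lia.
Qed.

Lemma bul_contr n A A' : dist n A A' -> dist (S n) (bul A) (bul A').
Proof.
  intros H [|m] M Hm; simpl. tauto. apply H. lia.
Qed.

Lemma tv_dist T eta eta' rho rho' n : top_variant T = true ->
  dist n (interp eta rho T) (interp eta' rho' T).
Proof.
  intros Ht k M Hk. split; intros H; apply top_variant_full; auto; eapply interp_lc; eauto.
Qed.

Lemma nth_F2 n rho rho' : Forall2 (dist n) rho rho' -> forall i, dist n (nth i rho full) (nth i rho' full).
Proof.
  induction 1; intros [|i]; simpl; auto using dist_refl.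
Qed.

Lemma F2_refl n rho : Forall2 (dist n) rho rho.
Proof. induction rho; constructor; auto using dist_refl. Qed.

Lemma F2_mid n rho1 rho2 U V : dist n U V -> Forall2 (dist n) (rho1 ++ U :: rho2) (rho1 ++ V :: rho2).
Proof.
  intros H. apply Forall2_app. apply F2_refl. constructor; auto. apply F2_refl.
Qed.

Lemma F2_mono n m rho rho' : m <= n -> Forall2 (dist n) rho rho' -> Forall2 (dist m) rho rho'.
Proof. induction 2; constructor; auto. eapply dist_mono; eauto. Qed.

Lemma nth_mid (rho1 rho2 : list sem) U V i : i <> length rho1 ->
  nth i (rho1 ++ U :: rho2) full = nth i (rho1 ++ V :: rho2) full.
Proof.
  intros H. destruct (Nat.lt_ge_cases i (length rho1)).
  - rewrite !app_nth1 by auto. reflexivity.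
  - rewrite !app_nth2 by auto. destruct (i - length rho1) eqn:E; [lia|]. reflexivity.
Qed.

Lemma upd_dist n eta X U V : dist n U V -> forall Y, dist n (upd eta X U Y) (upd eta X V Y).
Proof. intros H Y. unfold upd. destruct (Y =? X); auto using dist_refl. Qed.

Lemma sem_props T : good T = true ->
  (forall eta eta' rho rho' n, (forall X, dist n (eta X) (eta' X)) ->
     Forall2 (dist n) rho rho' -> dist n (interp eta rho T) (interp eta' rho' T))
  /\ (forall k, pbv k T = true -> forall eta rho1 rho2 U V n, length rho1 = k ->
       dist n U V -> dist (S n) (interp eta (rho1 ++ U :: rho2) T) (interp eta (rho1 ++ V :: rho2) T))
  /\ (forall X, proper X T = true -> forall eta rho U V n, dist n U V ->
       dist (S n) (interp (upd eta X U) rho T) (interp (upd eta X V) rho T)).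
Proof.
  induction T as [Y|i|A IHA B IHB|A IHA|A IHA]; intros Hg; simpl in Hg.
  - split; [|split].
    + intros eta eta' rho rho' n He Hr k M Hk. simpl. specialize (He Y k M Hk). tauto.
    + intros. apply dist_refl.
    + intros X Hp eta rho U V n H. simpl in Hp. simpl. unfold upd.
      destruct (Y =? X) eqn:E; [discriminate|]. apply dist_refl.
  - split; [|split].
    + intros eta eta' rho rho' n He Hr k M Hk. simpl.
      pose proof (nth_F2 n rho rho' Hr i k M Hk). tauto.
    + intros k Hp eta rho1 rho2 U V n Hl H. simpl in Hp. simpl.
      rewrite (nth_mid rho1 rho2 U V i). apply dist_refl.
      intros E; subst. rewrite Nat.eqb_refl in Hp. discriminate.
    + intros. apply dist_refl.
  - apply andb_prop in Hg as [HgA HgB].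
    destruct (IHA HgA) as [NA [BA FA]]. destruct (IHB HgB) as [NB [BB FB]].
    split; [|split].
    + intros. change (dist n (arr (interp eta rho A) (interp eta rho B))
                              (arr (interp eta' rho' A) (interp eta' rho' B))).
      apply arr_dist; auto.
    + intros k Hp eta rho1 rho2 U V n Hl H.
      simpl in Hp; destruct (pbv k A && pbv k B) eqn:E.
      * apply andb_prop in E as [E1 E2].
        change (dist (S n) (arr (interp eta (rho1 ++ U :: rho2) A) (interp eta (rho1 ++ U :: rho2) B))
                           (arr (interp eta (rho1 ++ V :: rho2) A) (interp eta (rho1 ++ V :: rho2) B))).
        apply arr_dist; [apply (BA k E1) | apply (BB k E2)]; auto.
      * simpl in Hp. apply tv_dist. exact Hp.
    + intros X Hp eta rho U V n H.
      simpl in Hp; destruct (proper X A && proper X B) eqn:E.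
      * apply andb_prop in E as [E1 E2].
        change (dist (S n) (arr (interp (upd eta X U) rho A) (interp (upd eta X U) rho B))
                           (arr (interp (upd eta X V) rho A) (interp (upd eta X V) rho B))).
        apply arr_dist; [apply (FA X E1) | apply (FB X E2)]; auto.
      * simpl in Hp. apply tv_dist. exact Hp.
  - destruct (IHA Hg) as [NA [BA FA]].
    split; [|split].
    + intros. change (dist n (bul (interp eta rho A)) (bul (interp eta' rho' A))).
      apply dist_mono with (S n); [lia|]. apply bul_contr. auto.
    + intros k Hp eta rho1 rho2 U V n Hl H.
      change (dist (S n) (bul (interp eta (rho1 ++ U :: rho2) A)) (bul (interp eta (rho1 ++ V :: rho2) A))).
      apply bul_contr. apply NA. intros; apply dist_refl. apply F2_mid; auto.
    + intros X Hp eta rho U V n H.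
      change (dist (S n) (bul (interp (upd eta X U) rho A)) (bul (interp (upd eta X V) rho A))).
      apply bul_contr. apply NA. apply upd_dist; auto. apply F2_refl.
  - apply andb_prop in Hg as [HgA Hp0].
    destruct (IHA HgA) as [NA [BA FA]].
    assert (Hc : forall eta rho, contractive (fun W => interp eta (W :: rho) A)).
    { intros eta rho n U V H. apply (BA 0 Hp0 eta [] rho U V n); auto. }
    split; [|split].
    + intros eta eta' rho rho' n He Hr. apply fix_dist; [apply Hc|apply Hc|intros W]. apply NA; auto. constructor; auto using dist_refl.
    + intros k Hp eta rho1 rho2 U V n Hl H.
      simpl in Hp; destruct (pbv (S k) A) eqn:E.
      * apply fix_dist; [apply Hc|apply Hc|intros W].
        apply (BA (S k) E eta (W :: rho1) rho2 U V n); simpl; auto.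
      * simpl in Hp. apply tv_dist. exact Hp.
    + intros X Hp eta rho U V n H.
      simpl in Hp; destruct (proper X A) eqn:E.
      * apply fix_dist; [apply Hc|apply Hc|intros W; apply FA; auto].
      * simpl in Hp. apply tv_dist. exact Hp.
Qed.
Lemma interp_ftv T : forall eta eta' rho, (forall X, In X (ftv T) -> eta X = eta' X) ->
  interp eta rho T = interp eta' rho T.
Proof.
  induction T as [Y|i|A IHA B IHB|A IHA|A IHA]; simpl; intros eta eta' rho H.
  - rewrite (H Y); auto.
  - reflexivity.
  - rewrite (IHA eta eta' rho), (IHB eta eta' rho); auto;
      intros X HX; apply H; apply in_or_app; auto.
  - rewrite (IHA eta eta' rho); auto.
  - f_equal. apply functional_extensionality; intro U. apply IHA; auto.
Qed.

Lemma interp_close T : forall rho X U eta, ty_lc (length rho) T = true ->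
  interp eta (rho ++ [U]) (ty_close_rec (length rho) X T) = interp (upd eta X U) rho T.
Proof.
  induction T as [Y|i|A IHA B IHB|A IHA|A IHA]; simpl; intros rho X U eta Hl.
  - unfold upd. destruct (Y =? X) eqn:E; simpl.
    + rewrite app_nth2 by lia. rewrite Nat.sub_diag. reflexivity.
    + reflexivity.
  - apply Nat.ltb_lt in Hl. rewrite app_nth1 by auto. reflexivity.
  - apply andb_prop in Hl as [H1 H2]. rewrite IHA, IHB; auto.
  - rewrite IHA; auto.
  - f_equal. apply functional_extensionality; intro V.
    apply (IHA (V :: rho)); auto.
Qed.

Lemma ty_lc_mono T : forall j k, ty_lc j T = true -> j <= k -> ty_lc k T = true.
Proof.
  induction T; simpl; intros j k H Hjk; auto.
  - apply Nat.ltb_lt in H. apply Nat.ltb_lt. lia.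
  - apply andb_prop in H as [H1 H2]. rewrite (IHT1 j k), (IHT2 j k); auto.
  - eapply IHT; eauto.
  - apply (IHT (S j)); auto. lia.
Qed.

Lemma interp_rho T : forall k eta rho rho', ty_lc k T = true ->
  (forall i, i < k -> nth i rho full = nth i rho' full) ->
  interp eta rho T = interp eta rho' T.
Proof.
  induction T as [Y|i|A IHA B IHB|A IHA|A IHA]; simpl; intros k eta rho rho' Hl H.
  - reflexivity.
  - apply Nat.ltb_lt in Hl. rewrite H; auto.
  - apply andb_prop in Hl as [H1 H2]. rewrite (IHA k eta rho rho'), (IHB k eta rho rho'); auto.
  - rewrite (IHA k eta rho rho'); auto.
  - f_equal. apply functional_extensionality; intro V.
    apply (IHA (S k)); auto. intros [|i] Hi; simpl; auto. apply H. lia.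
Qed.

Lemma interp_rho0 T eta rho : ty_lc 0 T = true -> interp eta rho T = interp eta [] T.
Proof. intros H. apply (interp_rho T 0); auto. intros; lia. Qed.

Lemma interp_subst T : forall rho X U eta, ty_lc 0 U = true ->
  interp eta rho (ty_subst X U T) = interp (upd eta X (interp eta [] U)) rho T.
Proof.
  induction T as [Y|i|A IHA B IHB|A IHA|A IHA]; simpl; intros rho X U eta Hl.
  - unfold upd. destruct (Y =? X) eqn:E; simpl.
    + rewrite interp_rho0 by auto. apply sem_ext. intros n M. split; [|tauto].
      intros H; split; auto. eapply interp_lc; eauto.
    + reflexivity.
  - reflexivity.
  - rewrite IHA, IHB; auto.
  - rewrite IHA; auto.
  - f_equal. apply functional_extensionality; intro V. apply IHA; auto.
Qed.

Lemma open_close T : forall k X U, ty_lc k T = true ->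
  ty_open_rec k U (ty_close_rec k X T) = ty_subst X U T.
Proof.
  induction T as [Y|i|A IHA B IHB|A IHA|A IHA]; simpl; intros k X U Hl.
  - destruct (Y =? X); simpl; auto. rewrite Nat.eqb_refl; auto.
  - apply Nat.ltb_lt in Hl. destruct (i =? k) eqn:E; auto. apply Nat.eqb_eq in E; lia.
  - apply andb_prop in Hl as [H1 H2]. rewrite IHA, IHB; auto.
  - rewrite IHA; auto.
  - rewrite IHA; auto.
Qed.

Lemma lc_close T : forall k X, ty_lc k T = true -> ty_lc (S k) (ty_close_rec k X T) = true.
Proof.
  induction T as [Y|i|A IHA B IHB|A IHA|A IHA]; simpl; intros k X Hl.
  - destruct (Y =? X); simpl; auto. apply Nat.ltb_lt; lia.
  - apply Nat.ltb_lt in Hl. apply Nat.ltb_lt; lia.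
  - apply andb_prop in Hl as [H1 H2]. rewrite IHA, IHB; auto.
  - auto.
  - auto.
Qed.

Lemma lc_subst T : forall k X U, ty_lc k T = true -> ty_lc 0 U = true -> ty_lc k (ty_subst X U T) = true.
Proof.
  induction T as [Y|i|A IHA B IHB|A IHA|A IHA]; simpl; intros k X U Hl HU.
  - destruct (Y =? X); simpl; auto. eapply ty_lc_mono; eauto; lia.
  - auto.
  - apply andb_prop in Hl as [H1 H2]. rewrite IHA, IHB; auto.
  - auto.
  - auto.
Qed.

Lemma tv_close T : forall L k X, length L <= k ->
  tv L (Defs.tail (ty_close_rec k X T)) = tv L (Defs.tail T).
Proof.
  induction T as [Y|i|A IHA B IHB|A IHA|A IHA]; simpl; intros L k X Hl.
  - destruct (Y =? X); simpl; auto.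
    destruct (nth_error L k) eqn:E; auto.
    assert (k < length L) by (apply nth_error_Some; rewrite E; discriminate). lia.
  - auto.
  - auto.
  - apply IHA. rewrite length_map; auto.
  - apply IHA. simpl; lia.
Qed.

Lemma tv_subst T : forall L X U, tv L (Defs.tail T) = true -> tv L (Defs.tail (ty_subst X U T)) = true.
Proof.
  induction T as [Y|i|A IHA B IHB|A IHA|A IHA]; simpl; intros L X U H.
  - discriminate.
  - auto.
  - auto.
  - auto.
  - auto.
Qed.

Lemma tvar_close T k X : top_variant (ty_close_rec k X T) = top_variant T.
Proof. unfold top_variant. apply tv_close. simpl; lia. Qed.

Lemma tvar_mu_close A k X : top_variant (TMu (ty_close_rec (S k) X A)) = top_variant (TMu A).
Proof. unfold top_variant. simpl. apply tv_close. simpl; lia. Qed.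

Lemma pbv_close_proper T : forall k X, proper X T = true -> ty_lc k T = true ->
  pbv k (ty_close_rec k X T) = true.
Proof.
  induction T as [Y|i|A IHA B IHB|A IHA|A IHA]; simpl; intros k X Hp Hl.
  - destruct (Y =? X); simpl; auto. discriminate.
  - apply Nat.ltb_lt in Hl. destruct (i =? k) eqn:E; auto. apply Nat.eqb_eq in E; lia.
  - apply andb_prop in Hl as [H1 H2]. rewrite tvar_close.
    apply orb_prop in Hp as [Hp|Hp]; [|rewrite Hp; apply orb_true_r].
    apply andb_prop in Hp as [Hp1 Hp2]. rewrite IHA, IHB; auto.
  - auto.
  - rewrite tvar_mu_close.
    apply orb_prop in Hp as [Hp|Hp]; [|rewrite Hp; apply orb_true_r].
    rewrite IHA; auto.
Qed.

Lemma pbv_close T : forall j k X, pbv j T = true -> j <> k -> pbv j (ty_close_rec k X T) = true.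
Proof.
  induction T as [Y|i|A IHA B IHB|A IHA|A IHA]; simpl; intros j k X Hp Hjk.
  - destruct (Y =? X); simpl; auto. destruct (k =? j) eqn:E; auto. apply Nat.eqb_eq in E; lia.
  - auto.
  - rewrite tvar_close.
    apply orb_prop in Hp as [Hp|Hp]; [|rewrite Hp; apply orb_true_r].
    apply andb_prop in Hp as [Hp1 Hp2]. rewrite IHA, IHB; auto.
  - auto.
  - rewrite tvar_mu_close.
    apply orb_prop in Hp as [Hp|Hp]; [|rewrite Hp; apply orb_true_r].
    rewrite IHA; auto.
Qed.

Lemma good_close T : forall k X, good T = true -> good (ty_close_rec k X T) = true.
Proof.
  induction T as [Y|i|A IHA B IHB|A IHA|A IHA]; simpl; intros k X Hg.
  - destruct (Y =? X); auto.
  - auto.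
  - apply andb_prop in Hg as [H1 H2]. rewrite IHA, IHB; auto.
  - auto.
  - apply andb_prop in Hg as [H1 H2]. rewrite IHA, pbv_close; auto.
Qed.

Lemma pbv_lc T : forall j k, ty_lc j T = true -> j <= k -> pbv k T = true.
Proof.
  induction T as [Y|i|A IHA B IHB|A IHA|A IHA]; simpl; intros j k Hl Hjk.
  - auto.
  - apply Nat.ltb_lt in Hl. destruct (i =? k) eqn:E; auto. apply Nat.eqb_eq in E; lia.
  - apply andb_prop in Hl as [H1 H2]. rewrite (IHA j k), (IHB j k); auto.
  - auto.
  - rewrite (IHA (S j) (S k)); auto. lia.
Qed.

Lemma pbv_subst T : forall k X U, pbv k T = true -> ty_lc 0 U = true -> pbv k (ty_subst X U T) = true.
Proof.
  induction T as [Y|i|A IHA B IHB|A IHA|A IHA]; simpl; intros k X U Hp HU.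
  - destruct (Y =? X); auto. eapply pbv_lc; eauto; lia.
  - auto.
  - apply orb_prop in Hp as [Hp|Hp].
    + apply andb_prop in Hp as [Hp1 Hp2]. rewrite IHA, IHB; auto.
    + unfold top_variant in *. rewrite tv_subst; auto. apply orb_true_r.
  - auto.
  - apply orb_prop in Hp as [Hp|Hp].
    + rewrite IHA; auto.
    + unfold top_variant in *. simpl in *. rewrite tv_subst; auto. apply orb_true_r.
Qed.

Lemma good_subst T : forall X U, good T = true -> good U = true -> ty_lc 0 U = true ->
  good (ty_subst X U T) = true.
Proof.
  induction T as [Y|i|A IHA B IHB|A IHA|A IHA]; simpl; intros X U Hg HgU HU.
  - destruct (Y =? X); auto.
  - auto.
  - apply andb_prop in Hg as [H1 H2]. rewrite IHA, IHB; auto.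
  - auto.
  - apply andb_prop in Hg as [H1 H2]. rewrite IHA, pbv_subst; auto.
Qed.

Definition wf (T : ty) : Prop := good T = true /\ ty_lc 0 T = true.

Lemma wf_mu X A : wf A -> proper X A = true -> wf (TMu (ty_close X A)).
Proof.
  intros [Hg Hl] Hp. split; simpl.
  - unfold ty_close. rewrite good_close, pbv_close_proper; auto.
  - apply lc_close; auto.
Qed.

Lemma is_type_wf T : is_type T -> wf T.
Proof.
  induction 1.
  - split; auto.
  - destruct IHis_type1, IHis_type2; split; simpl; apply andb_true_intro; auto.
  - destruct IHis_type; split; simpl; auto.
  - apply wf_mu; auto.
Qed.

Lemma interp_mu eta X A : ty_lc 0 A = true ->
  interp eta [] (TMu (ty_close X A)) = mufix (fun U => interp (upd eta X U) [] A).
Proof.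
  intros Hl. simpl. f_equal. apply functional_extensionality; intro U.
  apply (interp_close A [] X U eta); auto.
Qed.

Lemma contr_upd eta rho X A : good A = true -> proper X A = true ->
  contractive (fun U => interp (upd eta X U) rho A).
Proof.
  intros Hg Hp n U V H. destruct (sem_props A Hg) as [_ [_ F]]. apply F; auto.
Qed.
Lemma top_tv : top_variant top = true.
Proof. reflexivity. Qed.

Lemma wf_top : wf top.
Proof. split; reflexivity. Qed.

Lemma teq_sound A B : teq A B -> forall eta, interp eta [] A = interp eta [] B.
Proof.
  induction 1; intros eta.
  - reflexivity.
  - symmetry; auto.
  - rewrite IHteq1; auto.
  - simpl. rewrite (IHteq eta). reflexivity.
  - simpl. rewrite (IHteq1 eta), (IHteq2 eta). reflexivity.
  - apply sem_ext. intros n M. split; intros HM.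
    + apply top_variant_full; auto. destruct HM; auto.
    + split. eapply interp_lc; eauto.
      intros k N Hk HN. apply top_variant_full; auto. apply app_term; [eapply interp_lc; eauto|].
      eapply interp_lc; eauto.
  - inversion H; subst. destruct (is_type_wf _ H1) as [Hg Hl].
    unfold ty_open, ty_close. rewrite open_close by auto.
    rewrite interp_subst by (apply lc_close; auto).
    fold (ty_close X A0). rewrite interp_mu by auto.
    symmetry. apply (mufix_eq (fun U => interp (upd eta X U) [] A0)). apply contr_upd; auto.
  - destruct (is_type_wf _ H0) as [Hg Hl].
    destruct (is_type_wf _ H) as [HgA HlA].
    rewrite interp_mu by auto. apply mufix_unique. apply contr_upd; auto.
    cbv beta. rewrite <- interp_subst by auto. symmetry. apply IHteq.
  - apply sem_ext. intros [|n] M; simpl; split.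
    + intros HM; split; auto. intros [|k] N Hk HN; [|lia]. apply app_term; auto.
    + tauto.
    + intros [HM H1]. split; auto. intros [|k] N Hk HN.
      * apply app_term; auto.
      * apply H1; auto. lia.
    + intros [HM H1]. split; auto. intros k N Hk HN. apply (H1 (S k)); auto. lia.
Qed.

Lemma wf_bul A : wf A -> wf (TBul A).
Proof. intros [H1 H2]; split; auto. Qed.
Lemma wf_arr A B : wf A -> wf B -> wf (TArr A B).
Proof. intros [H1 H2] [H3 H4]; split; simpl; apply andb_true_intro; auto. Qed.

Lemma teq_wf A B : teq A B -> wf A /\ wf B.
Proof.
  induction 1.
  - split; apply is_type_wf; auto.
  - tauto.
  - tauto.
  - split; apply wf_bul; tauto.
  - split; apply wf_arr; tauto.
  - split; [apply wf_arr|]; auto using wf_top, is_type_wf.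
  - split. apply is_type_wf; auto.
    inversion H; subst. destruct (is_type_wf _ H1) as [Hg Hl].
    destruct (is_type_wf _ H) as [Hg' Hl'].
    unfold ty_open, ty_close. rewrite open_close by auto.
    split. apply good_subst; auto. apply lc_subst; auto.
  - split. apply is_type_wf; auto. apply wf_mu; auto. apply is_type_wf; auto.
  - apply is_type_wf in H, H0.
    split; [apply wf_bul, wf_arr|apply wf_arr; apply wf_bul]; auto.
Qed.

Lemma sub_wf g A B : sub g A B -> wf A /\ wf B.
Proof.
  induction 1.
  - split; split; reflexivity.
  - split. apply is_type_wf; auto. apply wf_top.
  - apply teq_wf; auto.
  - tauto.
  - split; apply wf_bul; tauto.
  - split; apply wf_arr; tauto.
  - split; apply wf_mu; tauto.
  - split. apply is_type_wf; auto. apply wf_bul, is_type_wf; auto.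
Qed.
Definition dec (U : sem) := forall n M, U (S n) M -> U n M.
Definition expc (U : sem) := forall n M M', is_term M -> beta M M' -> U n M' -> U n M.
Definition adm (eta : nat -> sem) := forall X, dec (eta X) /\ expc (eta X).

Lemma dec_le U : dec U -> forall a b M, a <= b -> U b M -> U a M.
Proof.
  intros HU a b M Hab. induction Hab; auto.
Qed.

Lemma Forall_nth_full (P : sem -> Prop) rho i : P full -> Forall P rho -> P (nth i rho full).
Proof.
  intros Hf H. revert i. induction H; intros [|i]; simpl; auto.
Qed.

Lemma interp_dec T : good T = true -> forall eta rho, (forall X, dec (eta X)) -> Forall dec rho ->
  dec (interp eta rho T).
Proof.
  induction T as [Y|i|A IHA B IHB|A IHA|A IHA]; simpl; intros Hg eta rho He Hr.
  - intros n M [H1 H2]; split; auto. apply He; auto.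
  - intros n M [H1 H2]; split; auto.
    apply (Forall_nth_full dec rho i); auto. intros ? ? ?; exact I.
  - apply andb_prop in Hg as [H1 H2].
    intros n M [Hl H]; split; auto.
  - intros [|n] M H.
    + eapply interp_lc; eauto.
    + apply IHA; auto.
  - apply andb_prop in Hg as [H1 H2].
    set (F := fun U => interp eta (U :: rho) A).
    assert (Hc : contractive F).
    { intros n U V H. destruct (sem_props A H1) as [_ [BA _]].
      apply (BA 0 H2 eta [] rho U V n); auto. }
    assert (Hj : forall j, dec (iterS j F full)).
    { induction j; simpl. intros ? ? ?; exact I. apply IHA; auto. }
    intros n M H. apply (mufix_iter F Hc n (S (S n))); [lia|].
    apply Hj. exact H.
Qed.

Lemma interp_exp T : forall eta rho, (forall X, expc (eta X)) -> Forall expc rho ->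
  expc (interp eta rho T).
Proof.
  induction T as [Y|i|A IHA B IHB|A IHA|A IHA]; simpl; intros eta rho He Hr.
  - intros n M M' Hl Hb [H1 H2]; split; auto. eapply He; eauto.
  - intros n M M' Hl Hb [H1 H2]; split; auto.
    apply (Forall_nth_full expc rho i) with (M' := M'); auto. intros ? ? ? ? ? ?; exact I.
  - intros n M M' Hl Hb [H1 H2]; split; auto.
    intros k N Hk HN. apply (IHB eta rho He Hr k _ (App M' N)).
    + apply app_term; auto. eapply interp_lc; eauto.
    + apply beta_appl; auto.
    + apply H2; auto.
  - intros [|n] M M' Hl Hb H; auto. eapply IHA; eauto.
  - set (F := fun U => interp eta (U :: rho) A).
    assert (Hj : forall j, expc (iterS j F full)).
    { induction j; simpl. intros ? ? ? ? ? ?; exact I. apply IHA; auto. }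
    intros n M M' Hl Hb H. apply (Hj (S n) n M M'); auto.
Qed.

Lemma in_sa_ftv g Z W : In (Z, W) g -> In Z (sa_ftv g) /\ In W (sa_ftv g).
Proof.
  intros H. unfold sa_ftv. split; apply in_flat_map; exists (Z, W); simpl; auto.
Qed.

Lemma upd_neq eta X U Z : Z <> X -> upd eta X U Z = eta Z.
Proof. intros H. unfold upd. destruct (Z =? X) eqn:E; auto. apply Nat.eqb_eq in E; congruence. Qed.
Lemma upd_eq eta X U : upd eta X U X = U.
Proof. unfold upd. rewrite Nat.eqb_refl; auto. Qed.

Lemma mu_dec eta X A : wf A -> proper X A = true -> (forall Z, dec (eta Z)) ->
  dec (mufix (fun U => interp (upd eta X U) [] A)).
Proof.
  intros [Hg Hl] Hp He. rewrite <- interp_mu by auto.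
  apply interp_dec; auto. apply (wf_mu X A); [split|]; auto.
Qed.

Lemma mu_exp eta X A : wf A -> (forall Z, expc (eta Z)) ->
  expc (mufix (fun U => interp (upd eta X U) [] A)).
Proof.
  intros [Hg Hl] He. rewrite <- interp_mu by auto.
  apply interp_exp; auto.
Qed.

Theorem sub_sound g A B : sub g A B -> forall eta, adm eta -> forall n,
  (forall X Y, In (X, Y) g -> forall k M, k <= n -> eta X k M -> eta Y k M) ->
  forall M, interp eta [] A n M -> interp eta [] B n M.
Proof.
  induction 1; intros eta Hadm n Hg M HM.
  - simpl in *. destruct HM; split; auto. eapply Hg; eauto.
  - apply top_variant_full; auto. eapply interp_lc; eauto.
  - rewrite <- (teq_sound A B H0 eta). auto.
  - apply (IHsub2 eta Hadm n).
    { intros X Y Hin; apply Hg; apply H1; auto. }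
    apply (IHsub1 eta Hadm n); auto.
    intros X Y Hin; apply Hg; apply H1; auto.
  - destruct n as [|m]; simpl in *; auto.
    apply (IHsub eta Hadm m); auto. intros; eapply Hg; eauto.
  - simpl in *. destruct HM as [Hl HM]. split; auto. intros k N Hk HN.
    apply (IHsub2 eta Hadm k).
    { intros X Y Hin k' M' Hk' H'. apply (Hg X Y); auto. apply H1; auto. lia. }
    apply HM; auto.
    apply (IHsub1 eta Hadm k); auto.
    intros X Y Hin k' M' Hk' H'. apply (Hg X Y); auto. apply H1; auto. lia.
  -
    rename H into Hsub, H0 into Hu, H1 into Hwf', H2 into Hwf, H3 into HX, H4 into HY,
           H5 into HpA, H6 into HpB.
    destruct (sub_wf _ _ _ Hsub) as [WA WB].
    assert (HXY : X <> Y).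
    { destruct Hwf' as [Hd _]. apply (Hd (X, Y)). apply Hu. right; left; auto. }
    assert (Hdec : forall Z, dec (eta Z)) by (intros Z; apply Hadm).
    assert (Hexp : forall Z, expc (eta Z)) by (intros Z; apply Hadm).
    destruct WA as [HgA HlA]. destruct WB as [HgB HlB].
    rewrite interp_mu in * by auto.
    set (FA := fun U => interp (upd eta X U) [] A) in *.
    set (FB := fun U => interp (upd eta Y U) [] B) in *.
    assert (HcA : contractive FA) by (apply contr_upd; auto).
    assert (HcB : contractive FB) by (apply contr_upd; auto).
    assert (DA : dec (mufix FA)) by (apply mu_dec; auto; split; auto).
    assert (DB : dec (mufix FB)) by (apply mu_dec; auto; split; auto).
    assert (EA : expc (mufix FA)) by (apply mu_exp; auto; split; auto).
    assert (EB : expc (mufix FB)) by (apply mu_exp; auto; split; auto).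
    assert (Main : forall m, m <= n -> (forall i M, i < m -> mufix FA i M -> mufix FB i M) ->
                   forall M, mufix FA m M -> mufix FB m M).
    { intros m Hmn IHlt M0 HA.
      set (S' := fun k M => k < m /\ mufix FA k M).
      set (T' := fun k M => match m with 0 => True | S p => mufix FB (Nat.min k p) M end).
      set (eta' := upd (upd eta X S') Y T').
      assert (Hadm' : adm eta').
      { intros Z. unfold eta', upd. destruct (Z =? Y); [|destruct (Z =? X)]; [split..|apply Hadm].
        - intros k Q H. unfold T' in *. destruct m; auto. eapply dec_le; [exact DB| |exact H]. lia.
        - intros k Q Q' Hl Hb H. unfold T' in *. destruct m; auto. eapply EB; eauto.
        - intros k Q [H1 H2]. split; [lia|]. apply DA; auto.
        - intros k Q Q' Hl Hb [H1 H2]; split; auto. eapply EA; eauto. }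
      assert (Hg' : forall Z W, In (Z, W) g' -> forall k M, k <= m -> eta' Z k M -> eta' W k M).
      { intros Z W Hin k Q Hk H. apply Hu in Hin. destruct Hin as [Hin|[Heq|[]]].
        - destruct (in_sa_ftv _ _ _ Hin) as [HZ HW]. unfold eta' in *.
          assert (Z <> X) by (intro; subst; apply HX; apply in_or_app; left; auto).
          assert (Z <> Y) by (intro; subst; apply HY; apply in_or_app; left; auto).
          assert (W <> X) by (intro; subst; apply HX; apply in_or_app; left; auto).
          assert (W <> Y) by (intro; subst; apply HY; apply in_or_app; left; auto).
          rewrite !upd_neq in * by auto.
          apply (Hg Z W); auto; lia.
        - injection Heq; intros; subst Z W. unfold eta' in *. rewrite upd_eq.
          rewrite upd_neq in H by auto. rewrite upd_eq in H. destruct H as [Hkm HA'].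
          unfold T'. destruct m; [lia|]. replace (Nat.min k m) with k by lia. apply IHlt; auto. }
      specialize (IHsub eta' Hadm' m Hg').
      assert (EqA : interp eta' [] A = FA S').
      { unfold FA, eta'. apply interp_ftv. intros Z HZ. apply upd_neq.
        intro; subst; apply HY; apply in_or_app; right; auto. }
      assert (EqB : interp eta' [] B = FB T').
      { unfold FB, eta'. apply interp_ftv. intros Z HZ. unfold upd.
        destruct (Z =? Y) eqn:E1; auto. destruct (Z =? X) eqn:E2; auto.
        apply Nat.eqb_eq in E2; subst; exfalso; apply HX; apply in_or_app; right; auto. }
      assert (dA : dist (S m) (FA S') (FA (mufix FA))).
      { apply HcA. intros k Q Hk. unfold S'. tauto. }
      assert (dB : dist (S m) (FB T') (FB (mufix FB))).
      { apply HcB. intros k Q Hk. unfold T'. destruct m; [lia|].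
        replace (Nat.min k m) with k by lia. tauto. }
      rewrite <- (mufix_eq FB HcB). apply dB; [lia|]. rewrite <- EqB. apply IHsub.
      rewrite EqA. apply dA; [lia|]. rewrite (mufix_eq FA HcA). exact HA. }
    assert (Hstrong : forall m j, j <= m -> j <= n -> forall M, mufix FA j M -> mufix FB j M).
    { induction m; intros j Hj Hjn M0 H0.
      - apply Main; auto. intros; lia.
      - destruct (Nat.le_gt_cases j m). apply IHm; auto.
        apply Main; auto. intros i M1 Hi H1. apply (IHm i); auto; lia. }
    apply (Hstrong n n); auto.
  - destruct n as [|m]; simpl; [eapply interp_lc; eauto|].
    apply (interp_dec A); auto. apply is_type_wf; auto. intros Z; apply Hadm.
Qed.
Fixpoint msubst (s : nat -> tm) (M : tm) : tm :=
  match M with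
  | Var y => s y
  | BVar i => BVar i
  | Lam N => Lam (msubst s N)
  | App N P => App (msubst s N) (msubst s P)
  end.

Lemma tm_lc_mono M : forall j k, tm_lc_at j M = true -> j <= k -> tm_lc_at k M = true.
Proof.
  induction M; simpl; intros j k H Hjk; auto.
  - apply Nat.ltb_lt in H. apply Nat.ltb_lt. lia.
  - apply (IHM (S j)); auto; lia.
  - apply andb_prop in H as [H1 H2]. rewrite (IHM1 j k), (IHM2 j k); auto.
Qed.

Lemma lift_lc M : forall c, tm_lc_at c M = true -> tm_lift c M = M.
Proof.
  induction M; simpl; intros c H; auto.
  - apply Nat.ltb_lt in H. destruct (c <=? n) eqn:E; auto. apply Nat.leb_le in E; lia.
  - rewrite IHM; auto.
  - apply andb_prop in H as [H1 H2]. rewrite IHM1, IHM2; auto.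
Qed.

Lemma bsubst_lc M : forall k N, tm_lc_at k M = true -> tm_bsubst k N M = M.
Proof.
  induction M; simpl; intros k N H; auto.
  - apply Nat.ltb_lt in H. destruct (n =? k) eqn:E. apply Nat.eqb_eq in E; lia.
    destruct (k <? n) eqn:E2; auto. apply Nat.ltb_lt in E2; lia.
  - rewrite IHM; auto.
  - apply andb_prop in H as [H1 H2]. rewrite IHM1, IHM2; auto.
Qed.

Lemma msubst_lc M : forall k s, tm_lc_at k M = true -> (forall z, is_term (s z)) ->
  tm_lc_at k (msubst s M) = true.
Proof.
  induction M; simpl; intros k s H Hs; auto.
  - eapply tm_lc_mono; [apply Hs|lia].
  - apply andb_prop in H as [H1 H2]. rewrite IHM1, IHM2; auto.
Qed.

Lemma tm_close_lc M : forall k x, tm_lc_at k M = true -> tm_lc_at (S k) (tm_close_rec k x M) = true.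
Proof.
  induction M; simpl; intros k x H; auto.
  - destruct (n =? x); simpl; auto. apply Nat.ltb_lt; lia.
  - apply Nat.ltb_lt in H. apply Nat.ltb_lt. lia.
  - apply andb_prop in H as [H1 H2]. rewrite IHM1, IHM2; auto.
Qed.

Lemma subst_close M : forall k s x N, tm_lc_at k M = true -> (forall z, is_term (s z)) -> is_term N ->
  tm_bsubst k N (msubst s (tm_close_rec k x M)) = msubst (fun z => if z =? x then N else s z) M.
Proof.
  induction M; simpl; intros k s x N H Hs HN.
  - destruct (n =? x); simpl.
    + rewrite Nat.eqb_refl; auto.
    + apply bsubst_lc. eapply tm_lc_mono; [apply Hs|lia].
  - apply Nat.ltb_lt in H. destruct (n =? k) eqn:E. apply Nat.eqb_eq in E; lia.
    destruct (k <? n) eqn:E2; auto. apply Nat.ltb_lt in E2; lia.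
  - rewrite (lift_lc N 0) by auto. rewrite IHM; auto.
  - apply andb_prop in H as [H1 H2]. rewrite IHM1, IHM2; auto.
Qed.

Lemma msubst_id M : msubst Var M = M.
Proof. induction M; simpl; congruence. Qed.

Lemma in_bul_ctx G x C : In (x, C) (bul_ctx G) -> exists B, C = TBul B /\ In (x, B) G.
Proof.
  unfold bul_ctx. intros H. apply in_map_iff in H as [[y B] [E H]]. simpl in E.
  injection E; intros; subst. eauto.
Qed.

Lemma bul_ctx_in G x B : In (x, B) G -> In (x, TBul B) (bul_ctx G).
Proof. intros H. unfold bul_ctx. apply in_map_iff. exists (x, B); auto. Qed.

Lemma ctx_ok_bul G : ctx_ok (bul_ctx G) -> ctx_ok G.
Proof.
  intros [H1 H2]. split.
  - intros x A B HA HB. apply bul_ctx_in in HA, HB.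
    specialize (H1 _ _ _ HA HB). congruence.
  - intros x A HA. apply bul_ctx_in in HA. apply H2 in HA. inversion HA; auto.
Qed.

Lemma typing_lc G M A : typing G M A -> is_term M.
Proof.
  induction 1; try (unfold is_term; reflexivity); auto.
  - unfold is_term in *. simpl. apply tm_close_lc; auto.
  - apply app_term; auto.
Qed.

Lemma typing_ok G M A : typing G M A -> ctx_ok G.
Proof.
  induction 1; auto. apply ctx_ok_bul; auto.
Qed.

Lemma typing_wf G M A : typing G M A -> wf A.
Proof.
  induction 1.
  - apply is_type_wf. destruct H as [_ H]. eauto.
  - destruct IHtyping; split; auto.
  - apply wf_top.
  - apply sub_wf in H0; tauto.
  - apply wf_arr; auto. apply is_type_wf. destruct H1 as [_ H1]. apply (H1 x). apply H0. right; left; auto.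
  - destruct IHtyping1 as [Hg Hl]. simpl in Hg, Hl.
    apply andb_prop in Hg as [_ Hg]. apply andb_prop in Hl as [_ Hl]. split; auto.
Qed.

Theorem typing_sound G M A : typing G M A -> forall eta, adm eta -> forall n s,
  (forall z, is_term (s z)) ->
  (forall x C, In (x, C) G -> interp eta [] C n (s x)) ->
  interp eta [] A n (msubst s M).
Proof.
  induction 1; intros eta Hadm n s Hs HG.
  - apply HG; auto.
  - apply (IHtyping eta Hadm (S n) s Hs).
    intros x C HC. apply in_bul_ctx in HC as [B [-> HB]]. simpl. apply HG; auto.
  - apply top_variant_full; auto. apply msubst_lc; auto.
  - apply (sub_sound [] A B H0 eta Hadm n); auto.
    intros X Y [].
  - rename H into HM, H0 into Hu, H1 into Hok', H2 into Hok.
    pose proof (typing_lc _ _ _ HM) as HlM.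
    simpl. split.
    + unfold is_term. simpl. apply msubst_lc; auto. apply tm_close_lc; auto.
    + intros k N Hk HN.
      assert (HlN : is_term N) by (eapply interp_lc; eauto).
      apply (interp_exp B eta [] (fun X => proj2 (Hadm X)) (Forall_nil _) k _
               (tm_bsubst 0 N (msubst s (tm_close x M)))).
      * apply app_term; auto. unfold is_term; simpl. apply msubst_lc; auto. apply tm_close_lc; auto.
      * apply beta_redex.
      * unfold tm_close. rewrite subst_close; auto.
        apply IHtyping; auto.
        { intros z. destruct (z =? x); auto. }
        intros z C HC. apply Hu in HC. destruct HC as [HC|[HC|[]]].
        -- destruct (z =? x) eqn:E.
           ++ apply Nat.eqb_eq in E; subst z.
              assert (C = A). { destruct Hok' as [Hf _]. apply (Hf x); apply Hu; auto. right; left; auto. }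
              subst; auto.
           ++ destruct (is_type_wf C) as [HgC _]. { destruct Hok as [_ H]. eauto. }
              apply (dec_le _ (interp_dec C HgC eta [] (fun X => proj1 (Hadm X)) (Forall_nil _)) k n); auto.
        -- injection HC; intros; subst. rewrite Nat.eqb_refl; auto.
  - specialize (IHtyping1 eta Hadm n s Hs). specialize (IHtyping2 eta Hadm n s Hs).
    simpl. destruct IHtyping1 as [_ H3].
    + intros x C HC; apply HG; apply H1; auto.
    + apply H3; auto. apply IHtyping2. intros x C HC; apply HG; apply H1; auto.
Qed.
Ltac crush := repeat (match goal with
  | |- context [Nat.eqb ?a ?b] => let E := fresh in destruct (Nat.eqb a b) eqn:E;
       [apply Nat.eqb_eq in E | apply Nat.eqb_neq in E]
  | |- context [Nat.ltb ?a ?b] => let E := fresh in destruct (Nat.ltb a b) eqn:E;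
       [apply Nat.ltb_lt in E | apply Nat.ltb_ge in E]
  | |- context [Nat.leb ?a ?b] => let E := fresh in destruct (Nat.leb a b) eqn:E;
       [apply Nat.leb_le in E | apply Nat.leb_gt in E]
  end; simpl); try (exfalso; lia); try reflexivity; try (f_equal; lia).

Lemma lift_bsubst x N : forall c k, c <= k ->
  tm_bsubst (S k) (Var x) (tm_lift c N) = tm_lift c (tm_bsubst k (Var x) N).
Proof.
  induction N; simpl; intros c k Hck.
  - reflexivity.
  - crush.
  - f_equal. apply IHN. lia.
  - rewrite IHN1, IHN2; auto.
Qed.

Lemma bsubst_comm x Z : forall N j k, j <= k ->
  tm_bsubst k (Var x) (tm_bsubst j N Z) =
  tm_bsubst j (tm_bsubst k (Var x) N) (tm_bsubst (S k) (Var x) Z).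
Proof.
  induction Z; simpl; intros N j k Hjk.
  - reflexivity.
  - crush.
  - f_equal. rewrite IHZ by lia. f_equal. apply lift_bsubst. lia.
  - rewrite IHZ1, IHZ2; auto.
Qed.

Lemma beta_bsubst x P Q : beta P Q -> forall k, beta (tm_bsubst k (Var x) P) (tm_bsubst k (Var x) Q).
Proof.
  induction 1; intros k; simpl.
  - rewrite (bsubst_comm x M N 0 k) by lia. apply beta_redex.
  - apply beta_appl; auto.
  - apply beta_appr; auto.
  - apply beta_lam; auto.
Qed.

Lemma beta_bsubst_back x P : forall k R, beta (tm_bsubst k (Var x) P) R ->
  exists Q, beta P Q /\ R = tm_bsubst k (Var x) Q.
Proof.
  induction P as [y|i|P IHP|P1 IHP1 P2 IHP2]; simpl; intros k R H.
  - inversion H.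
  - destruct (i =? k); [|destruct (k <? i)]; inversion H.
  - inversion H; subst. destruct (IHP _ _ H1) as [Q [HQ ->]].
    exists (Lam Q); split; auto. apply beta_lam; auto.
  - inversion H; subst.
    + destruct P1 as [y|i|Z|Q1 Q2]; simpl in H1; try discriminate.
      * destruct (i =? k); [|destruct (k <? i)]; discriminate.
      * injection H1; intros; subst. exists (tm_bsubst 0 P2 Z). split. apply beta_redex.
        rewrite (bsubst_comm x Z P2 0 k) by lia. reflexivity.
    + destruct (IHP1 _ _ H3) as [Q [HQ ->]]. exists (App Q P2); split; auto. apply beta_appl; auto.
    + destruct (IHP2 _ _ H3) as [Q [HQ ->]]. exists (App P1 Q); split; auto. apply beta_appr; auto.
Qed.

Lemma rt_bsubst_back x R N : clos_refl_trans_1n tm beta R N -> forall P, R = tm_bsubst 0 (Var x) P ->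
  exists Q, clos_refl_trans tm beta P Q /\ N = tm_bsubst 0 (Var x) Q.
Proof.
  induction 1; intros P HP; subst.
  - exists P; split; auto. apply rt_refl.
  - destruct (beta_bsubst_back x P 0 y H) as [Q [HQ ->]].
    destruct (IHclos_refl_trans_1n Q eq_refl) as [Q' [HQ' ->]].
    exists Q'; split; auto. eapply rt_trans; [apply rt_step; eauto| auto].
Qed.

Lemma rt_lam M M' : clos_refl_trans tm beta M M' -> clos_refl_trans tm beta (Lam M) (Lam M').
Proof.
  induction 1. apply rt_step, beta_lam; auto. apply rt_refl. eapply rt_trans; eauto.
Qed.
Lemma rt_appl M M' N : clos_refl_trans tm beta M M' -> clos_refl_trans tm beta (App M N) (App M' N).
Proof.
  induction 1. apply rt_step, beta_appl; auto. apply rt_refl. eapply rt_trans; eauto.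
Qed.
Lemma rt_appr M N N' : clos_refl_trans tm beta N N' -> clos_refl_trans tm beta (App M N) (App M N').
Proof.
  induction 1. apply rt_step, beta_appr; auto. apply rt_refl. eapply rt_trans; eauto.
Qed.

Lemma wn_lam_open x P : beta_normalizable (tm_bsubst 0 (Var x) P) -> beta_normalizable (Lam P).
Proof.
  intros [N [Hr Hn]]. apply clos_rt_rt1n in Hr.
  destruct (rt_bsubst_back x _ _ Hr P eq_refl) as [Q [HQ ->]].
  exists (Lam Q). split. apply rt_lam; auto.
  intros R HR. inversion HR; subst. apply (Hn (tm_bsubst 0 (Var x) M')).
  apply beta_bsubst; auto.
Qed.

Lemma wn_app_var x M : beta_normalizable (App M (Var x)) -> beta_normalizable M.
Proof.
  intros [N [Hr Hn]]. apply clos_rt_rt1n in Hr.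
  remember (App M (Var x)) as R eqn:ER. revert M ER.
  induction Hr; intros M0 ER; subst.
  - exists M0. split. apply rt_refl. intros M' HM'. apply (Hn (App M' (Var x))). apply beta_appl; auto.
  - inversion H; subst.
    + apply (wn_lam_open x). exists z. split; auto. apply clos_rt1n_rt; auto.
    + destruct (IHHr Hn M' eq_refl) as [N' [HN' HN'n]].
      exists N'. split; auto. eapply rt_trans; [apply rt_step; eauto| auto].
    + inversion H3.
Qed.

Inductive ne : tm -> Prop :=
| ne_var x : ne (Var x)
| ne_app P N : ne P -> is_term N -> beta_normalizable N -> ne (App P N).

Lemma ne_props P : ne P -> is_term P /\ exists P', clos_refl_trans tm beta P P' /\
  beta_normal P' /\ (forall Z, P' <> Lam Z).
Proof.
  induction 1 as [x|P N HP IHne HN HWN].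
  - split. reflexivity. exists (Var x). split. apply rt_refl. split; [intros N HN; inversion HN|discriminate].
  - destruct IHne as [Hl [P' [H1 [H2 H3]]]]. split. apply app_term; auto.
    destruct HWN as [N' [HN1 HN2]].
    exists (App P' N'). split; [|split].
    + eapply rt_trans. apply rt_appl; eauto. apply rt_appr; auto.
    + intros R HR. inversion HR; subst.
      * eapply H3; eauto.
      * eapply H2; eauto.
      * eapply HN2; eauto.
    + discriminate.
Qed.

Lemma tv_bf T : forall L, bullet_free T = true -> (forall b, In b L -> b = false) ->
  tv L (Defs.tail T) = false.
Proof.
  induction T as [Y|i|A IHA B IHB|A IHA|A IHA]; simpl; intros L Hb HL; auto.
  - destruct (nth_error L i) eqn:E; auto. apply HL. eapply nth_error_In; eauto.
  - apply andb_prop in Hb as [_ Hb]. auto.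
  - discriminate.
  - apply IHA; auto. intros b [<-|Hb']; auto.
Qed.

Lemma lc_pbv_bf T : forall k, bullet_free T = true -> ty_lc (S k) T = true -> pbv k T = true ->
  ty_lc k T = true.
Proof.
  induction T as [Y|i|A IHA B IHB|A IHA|A IHA]; simpl; intros k Hb Hl Hp; auto.
  - apply Nat.ltb_lt in Hl. apply Nat.ltb_lt. destruct (i =? k) eqn:E; [discriminate|].
    apply Nat.eqb_neq in E. lia.
  - apply andb_prop in Hb as [Hb1 Hb2]. apply andb_prop in Hl as [Hl1 Hl2].
    unfold top_variant in Hp. rewrite tv_bf in Hp by (auto; intros b []).
    rewrite orb_false_r in Hp. apply andb_prop in Hp as [Hp1 Hp2].
    rewrite IHA, IHB; auto.
  - discriminate.
  - unfold top_variant in Hp. simpl in Hp. rewrite tv_bf in Hp by (auto; intros b [<-|[]]; auto).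
    rewrite orb_false_r in Hp. auto.
Qed.

Definition eta0 : nat -> sem := fun _ _ M => beta_normalizable M.

Lemma adm0 : adm eta0.
Proof.
  intros X. split.
  - intros n M H; exact H.
  - intros n M M' Hl Hb [N [Hr Hn]]. exists N. split; auto.
    eapply rt_trans; [apply rt_step; eauto|auto].
Qed.

Lemma tait T : bullet_free T = true -> good T = true -> ty_lc 0 T = true -> forall n,
  (forall M, interp eta0 [] T n M -> beta_normalizable M) /\
  (forall P, ne P -> interp eta0 [] T n P).
Proof.
  induction T as [Y|i|A IHA B IHB|A IHA|A IHA]; simpl; intros Hb Hg Hl n.
  - split. intros M [_ H]; exact H.
    intros P HP. destruct (ne_props P HP) as [H1 [P' [H2 [H3 _]]]]. split; auto. exists P'; auto.
  - discriminate.
  - apply andb_prop in Hb as [Hb1 Hb2]. apply andb_prop in Hg as [Hg1 Hg2].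
    apply andb_prop in Hl as [Hl1 Hl2].
    split.
    + intros M [HM H]. apply (wn_app_var 0).
      apply (IHB Hb2 Hg2 Hl2 n). apply H; auto. apply (IHA Hb1 Hg1 Hl1 n). constructor.
    + intros P HP. split. apply ne_props; auto.
      intros k N Hk HN. apply (IHB Hb2 Hg2 Hl2 k). constructor; auto.
      eapply interp_lc; eauto. apply (IHA Hb1 Hg1 Hl1 k); auto.
  - discriminate.
  - apply andb_prop in Hg as [Hg1 Hg2].
    assert (Hl0 : ty_lc 0 A = true) by (apply lc_pbv_bf; auto).
    unfold mufix. simpl. rewrite interp_rho0 by auto. apply IHA; auto.
Qed.

Theorem theorem8 (G : ctx) (M : tm) (A : ty) :
  (forall x B, In (x, B) G -> bullet_free B = true) ->
  bullet_free A = true ->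
  typing G M A ->
  beta_normalizable M.
Proof.
  intros HG HA Hty.
  destruct (typing_wf _ _ _ Hty) as [Hg Hl].
  pose proof (typing_ok _ _ _ Hty) as [_ Hok].
  pose proof (typing_sound _ _ _ Hty eta0 adm0 0 Var (fun z => eq_refl)) as H.
  rewrite msubst_id in H.
  apply (tait A HA Hg Hl 0). apply H.
  intros x C HC. destruct (is_type_wf C (Hok _ _ HC)) as [HgC HlC].
  apply (tait C (HG _ _ HC) HgC HlC 0). constructor.
Qed.
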